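(* Let $\lambda\neq0$ be real and $n,k\ge1$ integers with $n\ge k$. Then $$\sum_{j=0}^{n}\binom{n+k-1}{j}S_{2,\lambda}^{[2]}(n-j+k,2k)\,\beta_{j,\lambda} =(n+k-1)!\Bigg\{\sum_{l=k}^{n}\frac{S_{2,\lambda}^{[2]}(l+k-2,2k-2)}{(l+k-2)!}(-\lambda)^{n-l} +\sum_{j=k}^{n}\sum_{l=k}^{j}\frac{S_{2,\lambda}^{[2]}(l+k-2,2k-2)\,\beta_{n-j,\lambda}\,(-\lambda)^{j-l+1}}{(l+k-2)!\,(n-j)!}\Bigg\}.$$
   Context: For real $\lambda\neq0$, $(x)_{0,\lambda}=1$, $(x)_{n,\lambda}=x(x-\lambda)\cdots(x-(n-1)\lambda)$ for $n\ge1$; $e_{\lambda}(t)=\sum_{k\ge0}(1)_{k,\lambda}\frac{t^k}{k!}=(1+\lambda t)^{1/\lambda}$ (formal power series). The $2$-truncated degenerate Stirling numbers of the second kind: for $k\ge0$, $\frac{1}{k!}(e_\lambda(t)-1-t)^k=\sum_{n\ge 2k}S^{[2]}_{2,\lambda}(n,2k)\frac{t^n}{n!}$, with $S^{[2]}_{2,\lambda}(n,2k)=0$ for $0\le n<2k$ (so $S^{[2]}_{2,\lambda}(n,0)=1$ if $n=0$ and $0$ otherwise). The degenerate Bernoulli numbers: $\frac{t}{e_\lambda(t)-1}=\sum_{n\ge0}\beta_{n,\lambda}\frac{t^n}{n!}$. *)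

(* Defs.v *)
From mathcomp Require Import all_boot all_order all_algebra.
Set Implicit Arguments. Unset Strict Implicit. Unset Printing Implicit Defensive.
Import Order.TTheory GRing.Theory Num.Theory.
Local Open Scope ring_scope.

(* Formal power series over R are represented by their coefficient
   sequences  f : nat -> R  (f n = coefficient of t^n). *)

Section PS.
Variable R : realFieldType.

Definition ps_mul (f g : nat -> R) : nat -> R :=
  fun n => \sum_(i < n.+1) f i * g (n - i)%N.

Definition ps_one : nat -> R := fun n => if n == 0%N then 1 else 0.

Fixpoint ps_pow (f : nat -> R) (k : nat) : nat -> R :=
  match k with
  | 0%N => ps_one
  | k'.+1 => ps_mul f (ps_pow f k')
  end.

Fixpoint ps_inv_seq (c : nat -> R) (n : nat) : seq R :=
  match n with
  | 0%N => [:: (c 0%N)^-1]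
  | n'.+1 => let s := ps_inv_seq c n' in
             rcons s (- (c 0%N)^-1 *
                      \sum_(i < n'.+1) c i.+1 * nth 0 s (n' - i)%N)
  end.

Definition ps_inv (c : nat -> R) : nat -> R :=
  fun n => nth 0 (ps_inv_seq c n) n.

Definition dfall (lam x : R) (n : nat) : R :=
  \prod_(i < n) (x - i%:R * lam).

Definition e_lam (lam : R) : nat -> R :=
  fun n => dfall lam 1 n / (n`!)%:R.

Definition e_lam_trunc2 (lam : R) : nat -> R :=
  fun n => if (n <= 1)%N then 0 else e_lam lam n.

(* S2trunc lam n k = S^{[2]}_{2,lam}(n, 2k), defined by
   (1/k!) (e_lam(t) - 1 - t)^k = sum_n S^{[2]}_{2,lam}(n,2k) t^n / n! *)
Definition S2trunc (lam : R) (n k : nat) : R :=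
  (n`!)%:R * (ps_pow (e_lam_trunc2 lam) k n / (k`!)%:R).

(* (e_lam(t) - 1)/t = sum_m (1)_{m+1,lam}/(m+1)! t^m  (constant term 1) *)
Definition e_lam_m1_div_t (lam : R) : nat -> R :=
  fun m => e_lam lam m.+1.

(* degenerate Bernoulli numbers:
   t/(e_lam(t) - 1) = ((e_lam(t)-1)/t)^{-1} = sum_n beta_{n,lam} t^n/n! *)
Definition dbeta (lam : R) (n : nat) : R :=
  (n`!)%:R * ps_inv (e_lam_m1_div_t lam) n.

End PS.

(* Main.v *)
Require Import Defs.
From mathcomp Require Import all_boot all_order all_algebra.
From mathcomp Require Import ring lra zify.
Import Order.TTheory GRing.Theory Num.Theory.
Local Open Scope ring_scope.

Module Helpers.
Set Implicit Arguments. Unset Strict Implicit. Unset Printing Implicit Defensive.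

Section Aux.
Variable R : realFieldType.
Implicit Types p q : {poly R}.

Record eqN (N : nat) p q : Prop := EqN { eqNP : forall i, (i < N)%N -> p`_i = q`_i }.

Lemma eqN_refl N p : eqN N p p. Proof. by constructor. Qed.
Lemma eqN_sym N p q : eqN N p q -> eqN N q p.
Proof. by move=> [h]; constructor=> i hi; rewrite h. Qed.
Lemma eqN_trans N p q r : eqN N p q -> eqN N q r -> eqN N p r.
Proof. by move=> [h1] [h2]; constructor=> i hi; rewrite h1 ?h2. Qed.
Lemma eqN_le N M p q : (M <= N)%N -> eqN N p q -> eqN M p q.
Proof. by move=> hMN [h]; constructor=> i hi; apply: h; apply: leq_trans hMN. Qed.
Lemma eqN_add N p p' q q' : eqN N p p' -> eqN N q q' -> eqN N (p + q) (p' + q').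
Proof. by move=> [h1] [h2]; constructor=> i hi; rewrite !coefD h1 ?h2. Qed.
Lemma eqN_opp N p p' : eqN N p p' -> eqN N (- p) (- p').
Proof. by move=> [h1]; constructor=> i hi; rewrite !coefN h1. Qed.
Lemma eqN_sub N p p' q q' : eqN N p p' -> eqN N q q' -> eqN N (p - q) (p' - q').
Proof. by move=> h1 h2; apply: eqN_add => //; apply: eqN_opp. Qed.
Lemma eqN_mul N p p' q q' : eqN N p p' -> eqN N q q' -> eqN N (p * q) (p' * q').
Proof.
move=> [h1] [h2]; constructor=> i hi; rewrite !coefM; apply: eq_bigr => j _.
rewrite h1 ?h2 //; [lia|]. have := ltn_ord j; lia.
Qed.
Lemma eqN_mull N p q q' : eqN N q q' -> eqN N (p * q) (p * q').
Proof. by move=> h; apply: eqN_mul. Qed.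
Lemma eqN_mulr N p q q' : eqN N q q' -> eqN N (q * p) (q' * p).
Proof. by move=> h; apply: eqN_mul. Qed.
Lemma eqN_muln N p q k : eqN N p q -> eqN N (p *+ k) (q *+ k).
Proof. by move=> [h]; constructor=> i hi; rewrite !coefMn h. Qed.
Lemma eqN_exp N p q k : eqN N p q -> eqN N (p ^+ k) (q ^+ k).
Proof. by move=> h; elim: k => [|k ih]; rewrite ?expr0 // !exprS; apply: eqN_mul. Qed.
Lemma eqN_deriv N p q : eqN N.+1 p q -> eqN N p^`() q^`().
Proof. by move=> [h]; constructor=> i hi; rewrite !coef_deriv h. Qed.
Lemma eqN_eq N p q : p = q -> eqN N p q.
Proof. by move=> ->; constructor. Qed.

Definition tr (N : nat) (f : nat -> R) : {poly R} := \poly_(i < N) f i.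

Lemma tr_coef N f i : (i < N)%N -> (tr N f)`_i = f i.
Proof. by move=> h; rewrite coef_poly h. Qed.

Lemma tr_mul N f g : eqN N (tr N (ps_mul f g)) (tr N f * tr N g).
Proof.
constructor=> i hi; rewrite tr_coef // coefM; apply: eq_bigr => j _.
rewrite !tr_coef //; [lia|]. have := ltn_ord j; lia.
Qed.

Lemma tr_one N : eqN N (tr N (ps_one R)) 1.
Proof. by constructor=> i hi; rewrite tr_coef // coef1 /ps_one; case: (i == 0%N). Qed.

Lemma tr_pow N f k : eqN N (tr N (ps_pow f k)) (tr N f ^+ k).
Proof.
elim: k => [|k ih] /=; first by rewrite expr0; apply: tr_one.
rewrite exprS; exact: (eqN_trans (tr_mul _ _ _) (eqN_mull _ ih)).
Qed.


Lemma size_inv_seq (c : nat -> R) n : size (ps_inv_seq c n) = n.+1.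
Proof. by elim: n => [|n ih] //=; rewrite size_rcons ih. Qed.

Lemma nth_inv_seq (c : nat -> R) n i : (i <= n)%N -> nth 0 (ps_inv_seq c n) i = ps_inv c i.
Proof.
elim: n => [|n ih] hi; first by move: hi; rewrite leqn0 => /eqP ->.
rewrite leq_eqVlt in hi; case/orP: hi => [/eqP ->|hi] //.
by rewrite /= nth_rcons size_inv_seq hi ih.
Qed.

Lemma ps_inv_S (c : nat -> R) n : ps_inv c n.+1 =
  - (c 0%N)^-1 * \sum_(i < n.+1) c i.+1 * ps_inv c (n - i)%N.
Proof.
rewrite /ps_inv /= nth_rcons size_inv_seq ltnn eqxx; congr (_ * _).
apply: eq_bigr => i _; rewrite nth_inv_seq //; lia.
Qed.

Lemma ps_inv_mul (c : nat -> R) n : c 0%N != 0 ->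
  ps_mul c (ps_inv c) n = ps_one R n.
Proof.
move=> c0; rewrite /ps_mul /ps_one; case: n => [|n].
  by rewrite big_ord1 /ps_inv /= mulfV.
rewrite big_ord_recl /= subn0 ps_inv_S mulrA mulrN mulfV // mulN1r.
under [X in _ + X]eq_bigr => i _ do rewrite subSS.
by rewrite addNr.
Qed.

Lemma pow_vanish (f : nat -> R) k (m : nat) : f 0%N = 0 -> f 1%N = 0 -> (m < 2 * k)%N ->
  ps_pow f k m = 0.
Proof.
move=> f0 f1; elim: k m => [|k ih] m hp; first by rewrite muln0 in hp.
rewrite /= /ps_mul big1 // => i _.
case: i => [[|[|i]] hi] /=; rewrite ?f0 ?f1 ?mul0r //.
by rewrite ih ?mulr0 //; lia.
Qed.


Lemma sum_shift (F G : nat -> R) (a c M U : nat) :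
  (forall i, (i < a)%N -> F i = 0) -> (a <= M)%N -> (U = c + (M - a))%N ->
  (forall i, (i < M - a)%N -> F (i + a)%N = G (i + c)%N) ->
  \sum_(0 <= i < M) F i = \sum_(c <= l < U) G l.
Proof.
move=> F0 haM hU hFG.
rewrite (@big_cat_nat _ _ _ a 0 M) //=.
rewrite [X in X + _]big_nat_cond big1 ?add0r; last first.
  by move=> i /andP [/andP [_ hi] _]; apply: F0.
rewrite -{1}[a]add0n big_addn -{1}[c]add0n big_addn.
rewrite (_ : (U - c = M - a)%N); last lia.
rewrite big_nat_cond [RHS]big_nat_cond; apply: eq_bigr => i /andP [/andP [_ hi] _].
exact: hFG.
Qed.

Section Lam.
Variable lam : R.

Lemma e0 : e_lam lam 0 = 1.
Proof. by rewrite /e_lam /dfall big_ord0 fact0 divr1. Qed.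
Lemma e1 : e_lam lam 1 = 1.
Proof. by rewrite /e_lam /dfall big_ord1 /= mul0r subr0 divr1. Qed.
Lemma eS i : (i.+1)%:R * e_lam lam i.+1 = e_lam lam i * (1 - i%:R * lam).
Proof.
rewrite /e_lam /dfall big_ord_recr /= factS natrM.
have h1 : (i.+1)%:R != 0 :> R by rewrite pnatr_eq0.
have h2 : (i`!)%:R != 0 :> R by rewrite pnatr_eq0 -lt0n fact_gt0.
by field; rewrite -mulrS h1 h2.
Qed.

Definition Lp : {poly R} := 1 + lam%:P * 'X.

Lemma E1 N : eqN N (tr N (e_lam lam)) (1 + 'X * tr N (e_lam_m1_div_t lam)).
Proof.
constructor=> i hi; rewrite tr_coef // coefD coef1 coefXM; case: i hi => [|i] hi /=.
  by rewrite e0 addr0.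
by rewrite add0r tr_coef //; lia.
Qed.

Lemma E2 N : eqN N (tr N (e_lam_trunc2 lam)) (tr N (e_lam lam) - 1 - 'X).
Proof.
constructor=> i hi; rewrite !coefB coef1 coefX !tr_coef // /e_lam_trunc2.
case: i hi => [|[|i]] hi /=; rewrite ?e0 ?e1 ?subrr ?subr0 ?subrr //.
Qed.

Lemma E3 N : eqN N (tr N (e_lam_m1_div_t lam) * tr N (ps_inv (e_lam_m1_div_t lam))) 1.
Proof.
have := tr_mul N (e_lam_m1_div_t lam) (ps_inv (e_lam_m1_div_t lam)). move/eqN_sym => h; apply: (eqN_trans h).
constructor=> i hi; rewrite tr_coef // ps_inv_mul ?coef1 /ps_one.
  by case: (i == 0%N).
by rewrite /e_lam_m1_div_t e1 oner_eq0.
Qed.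

Definition Vf (i : nat) : R := (- lam) ^+ i.

Lemma E4 N : eqN N (Lp * tr N Vf) 1.
Proof.
constructor=> i hi; rewrite /Lp mulrDl mul1r -mulrA coefD coefCM coefXM coef1.
case: i hi => [|i] hi /=; first by rewrite tr_coef // mulr0 addr0.
rewrite !tr_coef /Vf; [|lia|lia]. by rewrite exprS; ring.
Qed.

Lemma E5 N : eqN N (Lp * (tr N.+1 (e_lam lam))^`()) (tr N.+1 (e_lam lam)).
Proof.
constructor=> i hi; rewrite /Lp mulrDl mul1r -mulrA coefD coefCM coefXM !coef_deriv.
case: i hi => [|i] hi.
  rewrite eqxx !tr_coef; [|lia|lia].
  by rewrite mulr0 addr0 e0 e1 mulr1n.
rewrite (_ : (i.+1 == 0%N) = false) // succnK !tr_coef; [|lia|lia].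
rewrite -[e_lam lam i.+2 *+ _]mulr_natl -[e_lam lam i.+1 *+ _]mulr_natl eS.
by move: (i.+1%:R) (e_lam lam i.+1) => c x; ring.
Qed.

Lemma core N k :
 eqN N (tr N.+1 (ps_inv (e_lam_m1_div_t lam)) * (tr N.+1 (e_lam_trunc2 lam) ^+ k)^`())
   ((tr N.+1 (e_lam_trunc2 lam) ^+ k.-1 * ('X * tr N.+1 Vf)
     - lam%:P * (tr N.+1 (ps_inv (e_lam_m1_div_t lam)) * (tr N.+1 (e_lam_trunc2 lam) ^+ k.-1 * ('X * tr N.+1 Vf)))) *+ k).
Proof.
set T := tr N.+1 (e_lam_trunc2 lam).
set B := tr N.+1 (ps_inv (e_lam_m1_div_t lam)).
set V := tr N.+1 Vf.
set E := tr N.+1 (e_lam lam).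
set Q := tr N.+1 (e_lam_m1_div_t lam).
have hD : eqN N T^`() (E^`() - 1).
  apply: (eqN_trans (eqN_deriv (E2 N.+1))); apply: eqN_eq.
  by rewrite !derivB derivX -polyC1 derivC subr0.
have key : eqN N (B * (E^`() - 1)) ('X * V - lam%:P * (B * ('X * V))).
  have i1 : B * (E^`() - 1) = (1 - Lp*V) * (B*(E^`()-1)) + V*B*(Lp*E^`() - Lp).
    by rewrite /Lp; ring.
  apply: (eqN_trans (eqN_eq _ i1)).
  have h0 : eqN N (1 - Lp * V) (1 - 1) := eqN_sub (eqN_refl _ _) (eqN_le (leqnSn N) (E4 N.+1)).
  have h1 : eqN N (Lp * E^`() - Lp) ((1 + 'X * Q) - Lp).
    exact: eqN_sub (eqN_trans (E5 N) (eqN_le (leqnSn N) (E1 N.+1))) (eqN_refl _ _).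
  apply: (eqN_trans (eqN_add (eqN_mulr _ h0) (eqN_mull _ h1))).
  have i2 : (1 - 1) * (B * (E^`() - 1)) + V * B * (1 + 'X * Q - Lp) = 'X * V * (Q * B) - lam%:P * (B * ('X * V)).
    by rewrite /Lp; ring.
  apply: (eqN_trans (eqN_eq _ i2)).
  have h3 : eqN N (Q * B) 1 := eqN_le (leqnSn N) (E3 N.+1).
  apply: (eqN_trans (eqN_sub (eqN_mull _ h3) (eqN_refl _ _))).
  by apply: eqN_eq; rewrite mulr1.
rewrite deriv_exp mulrnAr; apply: eqN_muln.
have i3 : ('X * V - lam%:P * (B * ('X * V))) * T ^+ k.-1 = T ^+ k.-1 * ('X * V) - lam%:P * (B * (T ^+ k.-1 * ('X * V))) by ring.
rewrite -i3. apply: (eqN_trans (eqN_eq _ (mulrA _ _ _))).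
apply: eqN_mulr.
exact: (eqN_trans (eqN_mull _ hD) key).
Qed.

Definition Uf k i := ps_pow (e_lam_trunc2 lam) k.-1 i.
Definition Wf k r := \sum_(i < r.+1) Uf k i * Vf (r - i).
Definition bf (x : nat) := ps_inv (e_lam_m1_div_t lam) x.

Lemma coef_UV N k r : (r < N)%N ->
  (tr N (e_lam_trunc2 lam) ^+ k.-1 * tr N Vf)`_r = Wf k r.
Proof.
move=> hr; rewrite coefM; apply: eq_bigr => i _.
have hi := ltn_ord i.
rewrite -(eqNP (tr_pow N _ _)); last lia.
rewrite !tr_coef //; lia.
Qed.

Lemma coef_core k m : (0 < m)%N ->
  \sum_(j < m.+1) bf j * (ps_pow (e_lam_trunc2 lam) k (m - j).+1 *+ (m - j).+1)
  = (Wf k m.-1 - lam * \sum_(q < m) bf q * Wf k (m.-1 - q)) *+ k.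
Proof.
move=> hm; have := eqNP (core m.+1 k) (ltnSn m).
rewrite coefM coefMn coefB coefCM.
set T := tr m.+2 (e_lam_trunc2 lam). set V := tr m.+2 Vf. set B := tr m.+2 (ps_inv _).
have e1 : T ^+ k.-1 * ('X * V) = 'X * (T ^+ k.-1 * V) by rewrite mulrCA.
have e2 : B * (T ^+ k.-1 * ('X * V)) = 'X * (B * (T ^+ k.-1 * V)) by rewrite e1 mulrCA.
have m0 : (m == 0%N) = false by apply/negbTE; rewrite -lt0n.
rewrite e2 e1 !coefXM m0.
rewrite coef_UV; last lia.
rewrite coefM => H.
have L : \sum_(j < m.+1) bf j * (ps_pow (e_lam_trunc2 lam) k (m - j).+1 *+ (m - j).+1) =
   \sum_(j < m.+1) B`_j * (T ^+ k)^`()`_(m - j).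
  apply: eq_bigr => j _; have hj := ltn_ord j.
  rewrite tr_coef; last lia.
  rewrite coef_deriv -(eqNP (tr_pow m.+2 _ _)); last lia.
  rewrite tr_coef //; lia.
rewrite L H; congr ((_ - _ * _) *+ _).
rewrite prednK //.
apply: eq_bigr => q _; have hq := ltn_ord q.
rewrite tr_coef; last lia. rewrite coef_UV //; lia.
Qed.

Lemma Uf_vanish k i : (i < 2 * k.-1)%N -> Uf k i = 0.
Proof. by move=> h; rewrite /Uf pow_vanish. Qed.

Lemma Wf_vanish k r : (r < 2 * k.-1)%N -> Wf k r = 0.
Proof.
move=> h; rewrite /Wf big1 // => i _; have hi := ltn_ord i.
rewrite Uf_vanish ?mul0r //; lia.
Qed.

Lemma Wf_shift k j : (1 <= k)%N -> (k <= j)%N ->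
  Wf k (j + k - 2) = \sum_(k <= l < j.+1) Uf k (l + k - 2) * Vf (j - l).
Proof.
move=> hk hj; rewrite /Wf -(big_mkord xpredT (fun i => Uf k i * Vf (j + k - 2 - i))).
apply: (@sum_shift _ _ (2 * k.-1)).
- by move=> i hi; rewrite Uf_vanish ?mul0r.
- lia.
- lia.
- move=> i hi; congr (Uf k _ * Vf _); lia.
Qed.

Lemma W_main k n : (1 <= k)%N -> (k <= n)%N ->
  Wf k (n + k - 1).-1 = \sum_(k <= l < n.+1) Uf k (l + k - 2) * Vf (n - l).
Proof.
move=> hk hn; rewrite -Wf_shift //; congr Wf; lia.
Qed.

Lemma S_main k n : (1 <= k)%N -> (k <= n)%N ->
  \sum_(x < (n + k - 1)%N) bf x * Wf k ((n + k - 1).-1 - x)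
  = \sum_(k <= j < n.+1) bf (n - j) * Wf k (j + k - 2).
Proof.
move=> hk hn.
rewrite -(big_mkord xpredT (fun x => bf x * Wf k ((n + k - 1).-1 - x))).
rewrite big_nat_rev /=.
apply: (@sum_shift _ _ (2 * k.-1)).
- move=> i hi; rewrite Wf_vanish ?mulr0 //; lia.
- lia.
- lia.
- move=> i hi; congr (bf _ * Wf k _); lia.
Qed.

End Lam.
End Aux.

End Helpers.
Import Helpers.

Theorem theorem6 (R : realFieldType) (lam : R) (n k : nat)
  (hlam : lam != 0) (hk : (1 <= k)%N) (hn : (1 <= n)%N) (hkn : (k <= n)%N) :
  \sum_(0 <= j < n.+1)
      ('C(n + k - 1, j))%:R * S2trunc lam (n - j + k)%N k * dbeta lam j
  = ((n + k - 1)`!)%:R *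
    ( \sum_(k <= l < n.+1)
        S2trunc lam (l + k - 2)%N (k - 1)%N / ((l + k - 2)`!)%:R
          * (- lam) ^+ (n - l)%N
    + \sum_(k <= j < n.+1) \sum_(k <= l < j.+1)
        S2trunc lam (l + k - 2)%N (k - 1)%N * dbeta lam (n - j)%N
          * (- lam) ^+ (j - l + 1)%N
          / (((l + k - 2)`!)%:R * ((n - j)`!)%:R) ).
Proof.
have fk : forall x, (x`!)%:R != 0 :> R by move=> x; rewrite pnatr_eq0 -lt0n fact_gt0.
have km1 : (k - 1 = k.-1)%N by rewrite subn1.
have T0 : e_lam_trunc2 lam 0 = 0 by [].
have T1 : e_lam_trunc2 lam 1 = 0 by [].
set m := (n + k - 1)%N.
have hm : (0 < m)%N by rewrite /m; lia.
have HL : \sum_(0 <= j < n.+1)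
      ('C(m, j))%:R * S2trunc lam (n - j + k)%N k * dbeta lam j
  = (m`!)%:R / (k`!)%:R * \sum_(j < m.+1) bf lam j * (ps_pow (e_lam_trunc2 lam) k (m - j).+1 *+ (m - j).+1).
  rewrite -(big_mkord xpredT (fun j => bf lam j * (ps_pow (e_lam_trunc2 lam) k (m - j).+1 *+ (m - j).+1))).
  rewrite (@big_cat_nat _ _ _ n.+1 0 m.+1) //=; last by rewrite /m; lia.
  rewrite [X in _ = _ * (_ + X)]big_nat_cond [X in _ = _ * (_ + X)]big1 ?addr0; last first.
    move=> j /andP [/andP [hj1 hj2] _].
    rewrite pow_vanish ?mul0rn ?mulr0 //; rewrite /m in hj2 *; lia.
  rewrite big_distrr /= big_nat_cond [RHS]big_nat_cond; apply: eq_bigr => j /andP [/andP [_ hj] _].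
  have hj' : (j <= m)%N by rewrite /m; lia.
  rewrite (_ : (n - j + k = (m - j).+1)%N); last by rewrite /m; lia.
  have hN : ('C(m, j) * ((m - j).+1)`! * j`! = m`! * (m - j).+1)%N.
    rewrite factS -(bin_fact hj').
    move: ('C(m, j)) (j`!) ((m - j)`!) ((m - j).+1) => a b c d.
    nia.
  have hR : ('C(m, j))%:R * ((m - j).+1)`!%:R * (j`!)%:R = (m`!)%:R * ((m - j).+1)%:R :> R.
    by rewrite -!natrM hN.
  rewrite /S2trunc /dbeta /bf.
  move: hR; move: (ps_pow _ k _) (ps_inv _ j) => P b hR.
  rewrite -[P *+ _]mulr_natl.
  transitivity ('C(m, j)%:R * ((m - j).+1)`!%:R * (j`!)%:R * (P * b / (k`!)%:R)); first by ring.
  rewrite hR; ring.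
have F1 : \sum_(k <= l < n.+1)
      S2trunc lam (l + k - 2) (k - 1) / (l + k - 2)`!%:R * (- lam) ^+ (n - l)
    = ((k.-1)`!%:R)^-1 * \sum_(k <= l < n.+1) Uf lam k (l + k - 2) * Vf lam (n - l).
  rewrite big_distrr; apply: eq_bigr => l _.
  rewrite /S2trunc /Uf /Vf km1 /=. field. by rewrite !fk.
have F2 : \sum_(k <= j < n.+1) \sum_(k <= l < j.+1)
         S2trunc lam (l + k - 2) (k - 1) * dbeta lam (n - j) *
         (- lam) ^+ (j - l + 1) / ((l + k - 2)`!%:R * (n - j)`!%:R)
    = ((k.-1)`!%:R)^-1 * (- lam) * \sum_(k <= j < n.+1) bf lam (n - j) * Wf lam k (j + k - 2).
  rewrite big_distrr [LHS]big_nat_cond [RHS]big_nat_cond /=. apply: eq_bigr => j /andP [/andP [hj _] _].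
  rewrite Wf_shift // !big_distrr /=. apply: eq_bigr => l _.
  rewrite /S2trunc /dbeta /Uf /Vf /bf km1 addn1 exprS /=. field. by rewrite !fk.
rewrite HL coef_core // W_main // S_main // F1 F2.
rewrite -[in k`!](prednK hk) factS natrM -mulr_natl.
set W := \sum_(_ <= _ < _) _.
set S := \sum_(_ <= _ < _) _.
have hk0 : (k.-1.+1)%:R != 0 :> R by rewrite pnatr_eq0.
rewrite (prednK hk). field. by rewrite fk /= pnatr_eq0 -lt0n.
Qed.
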